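(* Let $k\ge1$, $\ell\ge3$, and let $\mathcal M_{k,\ell}$, $G$ and $\pi_{r,s}$ be as in the context. In the decomposition $H_1(\mathcal M_{k,\ell},\mathbb{R})=\bigoplus \pi_{r,s}$ (sum over classes $(r,s)\in\mathbb{Z}_{2k}\times\mathbb{Z}_\ell$ modulo $(r,s)\sim(-r,-s)$ with $r\ne0$, $s\ne0$, $\frac r{2k}+\frac s\ell\notin\mathbb{Z}$, each such representation appearing exactly once), any two distinct $2$-dimensional summands are orthogonal for the intersection form $\omega$ on $H_1(\mathcal M_{k,\ell},\mathbb{R})$.
   Context: Let $R$ be the rotation of $\mathbb{C}$ about $0$ by angle $2\pi/\ell$ and $S(z)=-\bar z$. Let $Q_{even}\subset\mathbb{C}$ be the closed regular polygon whose vertices are the $\ell$-th roots of unity, and $Q_{odd}=-Q_{even}$. Take copies $Q_i$, $i\in\mathbb{Z}_{2k}$, with $Q_i$ a copy of $Q_{even}$ for $i$ even and of $Q_{odd}$ for $i$ odd; its vertices are $A(i,j)=R^j(1)$ ($i$ even), $A(i,j)=-R^j(1)$ ($i$ odd), $j\in\mathbb{Z}_\ell$. For every $i\in\mathbb{Z}_{2k}$, $j\in\mathbb{Z}_\ell$, glue by a translation the segment of $Q_i$ from $A(i,j)$ to the midpoint of the side $[A(i,j),A(i,j+1)]$ to the segment of $Q_{i+1}$ from $A(i+1,j+1)$ to the midpoint of the side $[A(i+1,j),A(i+1,j+1)]$; the result is a compact translation surface $\mathcal M_{k,\ell}$. Let $G$ (of order $4k\ell$) be the group of affine diffeomorphisms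 of $\mathcal M_{k,\ell}$ generated by: $1_{2k}$, mapping each $Q_i$ onto $Q_{i+1}$ by $z\mapsto-z$; $1_\ell$, mapping each $Q_i$ to itself by $z\mapsto Rz$; and $\sigma$, mapping $Q_i$ onto $Q_{1-i}$ by $z\mapsto S(z)$. $G$ acts on $H_1(\mathcal M_{k,\ell},\mathbb{R})$. For $(r,s)\in\mathbb{Z}_{2k}\times\mathbb{Z}_\ell$, $\pi_{r,s}$ is the real representation of $G$ on $\mathbb{R}^2$ sending $\sigma$ to $S$, $1_{2k}$ to the rotation of angle $\pi r/k$, $1_\ell$ to the rotation of angle $2\pi s/\ell$; $\pi_{r,s}\cong\pi_{-r,-s}$, and it is irreducible when $(r,s)$ has order $>2$. The ''summands'' are the corresponding $\pi_{r,s}$-isotypic subspaces of $H_1(\mathcal M_{k,\ell},\mathbb{R})$. *)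

(* Defs.v *)
From mathcomp Require Import all_boot all_order all_algebra.
From mathcomp Require Import reals trigo.
Set Implicit Arguments. Unset Strict Implicit. Unset Printing Implicit Defensive.
Import Order.TTheory GRing.Theory Num.Theory.
Local Open Scope ring_scope.

(*  Polygon Q_i (i in Z_{2k}) has vertices A(i,j) and side midpoints M(i,j) *)
(*  (midpoint of [A(i,j),A(i,j+1)]), j in Z_l.                              *)
(*  1-cells: E(i,j) = the glued pair of segments [A(i,j),M(i,j)] in Q_i and *)
(*  [A(i+1,j+1),M(i+1,j)] in Q_{i+1}, oriented from A(i,j) to M(i,j).       *)
(*  0-cells: classes of A's and M's under A(i,j)~A(i+1,j+1), M(i,j)~M(i+1,j)*)
(*  2-cells: Q_i, counterclockwise; boundary traversal of Q_i is            *)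
(*    E(i,0), -E(i-1,0), E(i,1), -E(i-1,1), ..., E(i,l-1), -E(i-1,l-1).     *)
(*  Real cellular chains/cochains in degree 1 are functions nat->nat->R,    *)
(*  only the values at (i,j) with i < 2k, j < l being relevant.             *)

Definition chain (R : Type) := nat -> nat -> R.

Section Surface.
Variables (R : realType) (k l : nat).

Local Notation K := (2 * k)%N.

Definition predK (i : nat) : nat := ((i + K).-1 %% K)%N.
Definition oppK (i : nat) : nat := ((K - i) %% K)%N.
Definition succK (i : nat) : nat := (i.+1 %% K)%N.
Definition succL (j : nat) : nat := (j.+1 %% l)%N.
Definition predL (j : nat) : nat := ((j + l).-1 %% l)%N.
Definition oppL1 (j : nat) : nat := ((l - j).-1 %% l)%N.

Definition pair (c a : chain R) : R :=
  \sum_(i < K) \sum_(j < l) c i j * a i j.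

(* 1-cycles: the cellular boundary vanishes, i.e. pairs to zero with the   *)
(* coboundary of every real function on the 0-cells (vertex classes).      *)
Definition is_cycle (c : chain R) : Prop :=
  forall gA gM : nat -> nat -> R,
    (forall i j, (i < K)%N -> (j < l)%N -> gA i j = gA (succK i) (succL j)) ->
    (forall i j, (i < K)%N -> (j < l)%N -> gM i j = gM (succK i) j) ->
    \sum_(i < K) \sum_(j < l) c i j * (gM i j - gA i j) = 0.

(* homologous: difference is a cellular boundary sum_i a_i dQ_i           *)
(* (the coefficient of E(i,j) in dQ_i is 1, in dQ_{i+1} it is -1).        *)
Definition homologous (c c' : chain R) : Prop :=
  exists a : nat -> R, forall i j, (i < K)%N -> (j < l)%N ->
    c i j - c' i j = a i - a (succK i).

Definition is_cocycle (a : chain R) : Prop :=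
  forall i, (i < K)%N -> \sum_(j < l) (a i j - a (predK i) j) = 0.

(* value of a cochain on the m-th (signed) edge of the boundary of Q_i *)
Definition bseq (a : chain R) (i m : nat) : R :=
  if odd m then - a (predK i) m./2 else a i m./2.

(* cup product of 1-cocycles evaluated on the fundamental class          *)
(* (standard polygon formula: on each face sum_{m<n} a_m b_n             *)
(*  + 1/2 sum_m a_m b_m, along the boundary traversal).                  *)
Definition cupF (a b : chain R) : R :=
  \sum_(i < K) (\sum_(m < 2 * l) \sum_(n < 2 * l | (m < n)%N)
                   bseq a i m * bseq b i n
               + 2^-1 * \sum_(m < 2 * l) bseq a i m * bseq b i m).

Definition PD_dual (x a : chain R) : Prop :=
  is_cocycle a /\ forall b, is_cocycle b -> cupF b a = pair x b.

(* omega(x, y) = <PD^{-1}(x), y> (up to a global sign convention).        *)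
Definition omega_orth (x y : chain R) : Prop :=
  (exists a, PD_dual x a) /\ (forall a, PD_dual x a -> pair y a = 0).

(* Actions on 1-chains of the generators of G (push-forward).            *)
(* 1_{2k}: E(i,j) -> E(i+1,j);  1_l: E(i,j) -> E(i,j+1);                 *)
(* sigma:  E(i,j) -> E(-i,-j-1).                                          *)
Definition act_2k (c : chain R) : chain R := fun i j => c (predK i) j.
Definition act_l (c : chain R) : chain R := fun i j => c i (predL j).
Definition act_sigma (c : chain R) : chain R := fun i j => c (oppK i) (oppL1 j).

Definition lincomb (a : R) (u : chain R) (b : R) (v : chain R) : chain R :=
  fun i j => a * u i j + b * v i j.

(* (u, v) are the images of e1, e2 under a G-equivariant linear map      *)
(* R^2 -> H_1(M, R), for the representation pi_{r,s}:                    *)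
(* sigma -> S = diag(-1, 1), 1_{2k} -> rot(pi r / k), 1_l -> rot(2 pi s/l)*)
Definition rot_equiv (g : chain R -> chain R) (t : R) (u v : chain R) : Prop :=
  homologous (g u) (lincomb (cos t) u (sin t) v) /\
  homologous (g v) (lincomb (- sin t) u (cos t) v).

Definition equiv_pair (r s : nat) (u v : chain R) : Prop :=
  [/\ is_cycle u, is_cycle v,
      rot_equiv act_2k (pi * r%:R / k%:R) u v,
      rot_equiv act_l (2 * pi * s%:R / l%:R) u v &
      homologous (act_sigma u) (lincomb (-1) u 0 v) /\
      homologous (act_sigma v) v].

(* the pi_{r,s}-isotypic subspace of H_1: sum of the images of all       *)
(* G-equivariant maps pi_{r,s} -> H_1 (classes given by cycle reps).     *)
Definition isotypic (r s : nat) (x : chain R) : Prop :=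
  is_cycle x /\
  exists (n : nat) (u v : nat -> chain R) (a b : nat -> R),
    (forall t, (t < n)%N -> equiv_pair r s (u t) (v t)) /\
    homologous x (fun i j => \sum_(t < n) (a t * u t i j + b t * v t i j)).

End Surface.

(* r/(2k) + s/l not an integer, i.e. 2kl does not divide l r + 2k s.      *)
Definition summand_index (k l r s : nat) : bool :=
  [&& (0 < r < 2 * k)%N, (0 < s < l)%N & ~~ (2 * k * l %| l * r + 2 * k * s)%N].

Definition same_class (k l r s r' s' : nat) : bool :=
  ((r == r') && (s == s')) ||
  ((r' == (2 * k - r) %% (2 * k)) && (s' == (l - s) %% l))%N.

(* Main.v *)
Require Import Defs.
From mathcomp Require Import all_boot all_order all_algebra.
From mathcomp Require Import reals trigo.
From mathcomp Require Import zify ring lra.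
Set Implicit Arguments. Unset Strict Implicit. Unset Printing Implicit Defensive.
Import Order.TTheory GRing.Theory Num.Theory.
Local Open Scope ring_scope.

Section Idx.
Variables (n : nat) (hn : (0 < n)%N).

Lemma modSn_eq i : (i < n)%N -> (i.+1 %% n = if i.+1 == n then 0 else i.+1)%N.
Proof. move=> hi; case: eqP => [->|h]; first by rewrite modnn. rewrite modn_small //; lia. Qed.

Lemma predn_eq i : (i < n)%N -> ((i + n).-1 %% n = if i == 0 then n.-1 else i.-1)%N.
Proof.
move=> hi; case: eqP => [->|h]; first by rewrite add0n modn_small //; lia.
have -> : ((i + n).-1 = i.-1 + n)%N by lia.
by rewrite modnDr modn_small //; lia.
Qed.

Lemma pred_succ i : (i < n)%N -> ((i.+1 %% n + n).-1 %% n)%N = i.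
Proof.
move=> hi; rewrite modSn_eq //; case: eqP => h.
  rewrite predn_eq //=; lia.
rewrite predn_eq //=; lia.
Qed.

Lemma succ_pred i : (i < n)%N -> (((i + n).-1 %% n).+1 %% n)%N = i.
Proof.
move=> hi; rewrite predn_eq //; case: eqP => h.
  rewrite modSn_eq; [case: eqP; lia | lia].
rewrite modSn_eq; [case: eqP; lia | lia].
Qed.

Lemma sum_reindex (R : nmodType) (f g : nat -> nat) (F : nat -> R) :
  (forall i, (i < n)%N -> (f i < n)%N) -> (forall i, (i < n)%N -> g (f i) = i) ->
  \sum_(i < n) F (f i) = \sum_(i < n) F i.
Proof.
move=> hf hg.
pose h (i : 'I_n) : 'I_n := Ordinal (hf i (ltn_ord i)).
have hinj : injective h.
  move=> i j /(congr1 val) /= e; apply/val_inj => /=.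
  by rewrite -(hg i (ltn_ord i)) e hg.
rewrite [RHS](reindex_inj hinj) /=.
by apply: eq_bigr.
Qed.

End Idx.

Lemma sum_parity (R : nmodType) (m : nat) (F : nat -> R) :
  \sum_(i < 2 * m) F i = \sum_(j < m) (F (2 * j)%N + F (2 * j).+1).
Proof.
elim: m => [|m IH]; first by rewrite !big_ord0.
have -> : (2 * m.+1 = (2 * m).+2)%N by lia.
rewrite !big_ord_recr /= IH addrA.
congr (_ + _ + _); congr F; lia.
Qed.

Lemma pair_sym (R : comNzRingType) (N : nat) (F G : nat -> R) :
  \sum_(m < N) \sum_(n < N | (m < n)%N) F m * G n +
  \sum_(m < N) \sum_(n < N | (m < n)%N) G m * F n +
  \sum_(m < N) F m * G m = (\sum_(m < N) F m) * (\sum_(n < N) G n).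
Proof.
rewrite mulr_suml.
rewrite (eq_bigr (fun m : 'I_N => \sum_(n < N) (if (m < n)%N then F m * G n else 0))); last first.
  by move=> m _; rewrite big_mkcond.
set S2 := \sum_(m < N) \sum_(n < N | (m < n)%N) G m * F n.
have -> : S2 = \sum_(m < N) \sum_(n < N) (if (n < m)%N then F m * G n else 0).
  rewrite /S2 (eq_bigr (fun m : 'I_N => \sum_(n < N) (if (m < n)%N then G m * F n else 0))); last first.
    by move=> m _; rewrite big_mkcond.
  rewrite exchange_big /=; apply: eq_bigr => m _; apply: eq_bigr => n _.
  by case: ifP => // _; rewrite mulrC.
rewrite [X in _ + X = _](eq_bigr (fun m : 'I_N => \sum_(n < N) (if n == m then F m * G n else 0))); last first.
  by move=> m _; rewrite (bigD1 m) //= eqxx big1 ?addr0 // => n /negbTE ->.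
rewrite -!big_split /=; apply: eq_bigr => m _.
rewrite mulr_sumr -!big_split /=; apply: eq_bigr => n _.
case: eqP => [->|ne]; first by rewrite ltnn !add0r.
case: (ltngtP m n) => h; [by rewrite !addr0 | by rewrite add0r addr0 |].
by exfalso; apply: ne; apply: val_inj.
Qed.

Section Trig.
Variable R : realType.

Lemma cos2_ne1 (y : R) : 0 < y < pi -> cos (y *+ 2) != 1.
Proof.
move=> hy; have hs := sin_gt0_pi hy.
rewrite cos_mulr2n; apply/eqP => e.
have : cos y ^+ 2 = 1 by move: e; rewrite mulr2n; lra.
rewrite cos2sin2 => e2.
have : sin y ^+ 2 = 0 by lra.
move/eqP; rewrite expf_eq0 /= => /eqP h; lra.
Qed.

Lemma cos_ne1 (N n : nat) : (0 < N)%N -> (0 < n)%N -> (n < 4 * N)%N -> n != (2 * N)%N ->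
  cos (pi * n%:R / N%:R) != 1 :> R.
Proof.
move=> hN hn h4 h2.
have hNr : (0 : R) < N%:R by rewrite ltr0n.
have hpi := @pi_gt0 R.
case: (ltngtP n (2 * N)) => h; last by rewrite h eqxx in h2.
- have -> : (pi : R) * n%:R / N%:R = (pi * n%:R / N%:R / 2) *+ 2 by rewrite -mulr_natr; field; lra.
  apply: cos2_ne1; apply/andP; split.
  + apply: divr_gt0; last lra. apply: divr_gt0 => //; apply: mulr_gt0 => //; rewrite ltr0n.
    done.
  + rewrite ltr_pdivrMr ?ltr0n // ltr_pdivrMr //.
    have : (n%:R : R) < (2 * N)%:R by rewrite ltr_nat.
    rewrite natrM => hh; nra.
- have e : n = (n - 2 * N + 2 * N)%N by lia.
  have -> : (pi : R) * n%:R / N%:R = pi * (n - 2 * N)%N%:R / N%:R + pi *+ 2.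
    by rewrite {1}e natrD natrM -mulr_natr; field; lra.
  rewrite cosD2pi.
  have -> : (pi : R) * (n - 2 * N)%N%:R / N%:R = (pi * (n - 2 * N)%N%:R / N%:R / 2) *+ 2 by rewrite -mulr_natr; field; lra.
  apply: cos2_ne1; apply/andP; split.
  + apply: divr_gt0; last lra. apply: divr_gt0 => //; apply: mulr_gt0 => //; rewrite ltr0n.
    lia.
  + rewrite ltr_pdivrMr ?ltr0n // ltr_pdivrMr //.
    have : ((n - 2 * N)%N%:R : R) < (2 * N)%:R by rewrite ltr_nat; lia.
    rewrite natrM => hh; nra.
Qed.
End Trig.

Section Trig2.
Variable R : realType.
Lemma cosB_ne1 (N a b : nat) : (0 < N)%N -> a != b -> (a < 2 * N)%N -> (b < 2 * N)%N ->
  cos (pi * a%:R / N%:R - pi * b%:R / N%:R) != 1 :> R.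
Proof.
move=> hN hab ha hb; have hNr : (N%:R : R) != 0 by rewrite pnatr_eq0; lia.
case: (ltngtP a b) => h; last by rewrite h eqxx in hab.
- rewrite -cosN.
  have -> : - (pi * a%:R / N%:R - pi * b%:R / N%:R) = (pi : R) * (b - a)%N%:R / N%:R.
    by rewrite natrB ?(ltnW h) //; field.
  apply: cos_ne1; lia.
- have -> : pi * a%:R / N%:R - pi * b%:R / N%:R = (pi : R) * (a - b)%N%:R / N%:R.
    by rewrite natrB ?(ltnW h) //; field.
  apply: cos_ne1; lia.
Qed.

Lemma cosD_ne1 (N a b : nat) : (0 < N)%N -> (0 < a + b)%N -> (a + b < 4 * N)%N -> (a + b != 2 * N)%N ->
  cos (pi * a%:R / N%:R + pi * b%:R / N%:R) != 1 :> R.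
Proof.
move=> hN h0 h4 h2; have hNr : (N%:R : R) != 0 by rewrite pnatr_eq0; lia.
have -> : pi * a%:R / N%:R + pi * b%:R / N%:R = (pi : R) * (a + b)%N%:R / N%:R.
  by rewrite natrD; field.
exact: cos_ne1.
Qed.
End Trig2.

Lemma rot2 (R : realFieldType) (C S x y : R) : C ^+ 2 + S ^+ 2 = 1 -> C != 1 ->
  x = C * x + S * y -> y = - S * x + C * y -> x = 0 /\ y = 0.
Proof.
move=> h1 hC ex ey.
move/eqP: ex; rewrite -subr_eq0 => /eqP zx.
move/eqP: ey; rewrite -subr_eq0 => /eqP zy.
have e1 : (1 - C) * x - S * y = 0 by rewrite -zx; ring.
have e2 : S * x + (1 - C) * y = 0 by rewrite -zy; ring.
have e3 : ((1 - C) ^+ 2 + S ^+ 2) * x = 0.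
  have -> : ((1 - C) ^+ 2 + S ^+ 2) * x = (1 - C) * ((1 - C) * x - S * y) + S * (S * x + (1 - C) * y) by ring.
  by rewrite e1 e2; ring.
have hne : (1 - C) ^+ 2 + S ^+ 2 != 0.
  have -> : (1 - C) ^+ 2 + S ^+ 2 = 2 * (1 - C) + (C ^+ 2 + S ^+ 2 - 1) by ring.
  rewrite h1 subrr addr0.
  rewrite mulf_eq0 negb_or subr_eq0; apply/andP; split; [apply/eqP; lra | by rewrite eq_sym].
have hx : x = 0 by move/eqP: e3; rewrite mulf_eq0 (negbTE hne) /= => /eqP.
split=> //.
have : (1 - C) * y = 0 by rewrite -e2 hx; ring.
by move/eqP; rewrite mulf_eq0 subr_eq0 eq_sym (negbTE hC) /= => /eqP.
Qed.

Lemma alg_rot (R : realFieldType) (m11 m12 m21 m22 c s c' s' : R) :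
  c ^+ 2 + s ^+ 2 = 1 -> c' ^+ 2 + s' ^+ 2 = 1 ->
  m11 = c * c' * m11 + c * s' * m12 + s * c' * m21 + s * s' * m22 ->
  m12 = - c * s' * m11 + c * c' * m12 - s * s' * m21 + s * c' * m22 ->
  m21 = - s * c' * m11 - s * s' * m12 + c * c' * m21 + c * s' * m22 ->
  m22 = s * s' * m11 - s * c' * m12 - c * s' * m21 + c * c' * m22 ->
  (c * c' + s * s' != 1 -> m11 + m22 = 0 /\ m12 - m21 = 0) /\
  (c * c' - s * s' != 1 -> m11 - m22 = 0 /\ m12 + m21 = 0).
Proof.
move=> h h' e11 e12 e21 e22.
move/eqP: e11; rewrite -subr_eq0 => /eqP z11.
move/eqP: e12; rewrite -subr_eq0 => /eqP z12.
move/eqP: e21; rewrite -subr_eq0 => /eqP z21.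
move/eqP: e22; rewrite -subr_eq0 => /eqP z22.
split => hC.
- apply: (rot2 (S := c * s' - s * c') _ hC).
  + by rewrite -[RHS](mul1r 1) -{1}h -h'; ring.
  + apply/eqP; rewrite -subr_eq0; apply/eqP; rewrite -[RHS](addr0 0) -{1}z11 -z22; ring.
  + apply/eqP; rewrite -subr_eq0; apply/eqP; rewrite -[RHS](subr0 0) -{1}z12 -z21; ring.
- apply: (rot2 (S := c * s' + s * c') _ hC).
  + by rewrite -[RHS](mul1r 1) -{1}h -h'; ring.
  + apply/eqP; rewrite -subr_eq0; apply/eqP; rewrite -[RHS](subr0 0) -{1}z11 -z22; ring.
  + apply/eqP; rewrite -subr_eq0; apply/eqP; rewrite -[RHS](addr0 0) -{1}z12 -z21; ring.
Qed.

Lemma pos_sq2 (R : realDomainType) (x y : R) : x != 0 -> 0 < x ^+ 2 + y ^+ 2.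
Proof.
move=> hx; have h1 : 0 < x ^+ 2 by rewrite exprn_even_gt0 //= hx orbT.
have := sqr_ge0 y; lra.
Qed.

Definition coefs (R : fieldType) (c1 s1 c2 s2 p0 q0 : R) : R * R :=
  let cw := c1 * c2 - s1 * s2 in let sw := s1 * c2 + c1 * s2 in
  let m1 := c1 + cw - (c1 * cw - s1 * sw) - 1 in
  let m2 := s1 + sw - (s1 * cw + c1 * sw) in
  let N := m1 ^+ 2 + m2 ^+ 2 in ((m1 * p0 + m2 * q0) / N, (m1 * q0 - m2 * p0) / N).

Section Main.
Variables (R : realType) (k l : nat).
Hypotheses (hk : (0 < k)%N) (hl : (0 < l)%N).
Local Notation K := (2 * k)%N.
Local Notation pK := (predK k).
Local Notation sK := (succK k).
Local Notation pL := (predL l).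
Local Notation sL := (succL l).
Local Notation hom := (@homologous R k l).
Local Notation pr := (@pair R k l).

Lemma hK : (0 < K)%N. Proof. lia. Qed.
Lemma pK_lt i : (pK i < K)%N. Proof. by rewrite /predK ltn_pmod // hK. Qed.
Lemma sK_lt i : (sK i < K)%N. Proof. by rewrite /succK ltn_pmod // hK. Qed.
Lemma pL_lt j : (pL j < l)%N. Proof. by rewrite /predL ltn_pmod. Qed.
Lemma sL_lt j : (sL j < l)%N. Proof. by rewrite /succL ltn_pmod. Qed.
Lemma pK_sK i : (i < K)%N -> pK (sK i) = i. Proof. exact: (pred_succ hK). Qed.
Lemma sK_pK i : (i < K)%N -> sK (pK i) = i. Proof. exact: (succ_pred hK). Qed.
Lemma pL_sL j : (j < l)%N -> pL (sL j) = j. Proof. exact: (pred_succ hl). Qed.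
Lemma sL_pL j : (j < l)%N -> sL (pL j) = j. Proof. exact: (succ_pred hl). Qed.

Lemma sumK_sK (F : nat -> R) : \sum_(i < K) F (sK i) = \sum_(i < K) F i.
Proof. apply: (@sum_reindex _ _ _ pK F) => i hi. exact: sK_lt. exact: pK_sK. Qed.
Lemma sumK_pK (F : nat -> R) : \sum_(i < K) F (pK i) = \sum_(i < K) F i.
Proof. apply: (@sum_reindex _ _ _ sK F) => i hi. exact: pK_lt. exact: sK_pK. Qed.
Lemma sumL_sL (F : nat -> R) : \sum_(j < l) F (sL j) = \sum_(j < l) F j.
Proof. apply: (@sum_reindex _ _ _ pL F) => i hi. exact: sL_lt. exact: pL_sL. Qed.
Lemma sumL_pL (F : nat -> R) : \sum_(j < l) F (pL j) = \sum_(j < l) F j.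
Proof. apply: (@sum_reindex _ _ _ sL F) => i hi. exact: pL_lt. exact: sL_pL. Qed.

Lemma hom_ext (c c' : chain R) :
  (forall i j, (i < K)%N -> (j < l)%N -> c i j = c' i j) -> hom c c'.
Proof. move=> h; exists (fun=> 0%R) => i j hi hj; by rewrite h //= !subrr. Qed.

Lemma hom_refl c : hom c c. Proof. exact: hom_ext. Qed.

Lemma hom_sym c c' : hom c c' -> hom c' c.
Proof. case=> a h; exists (fun i => - a i) => i j hi hj; rewrite -opprB h // opprB; lra. Qed.

Lemma hom_trans c1 c2 c3 : hom c1 c2 -> hom c2 c3 -> hom c1 c3.
Proof.
case=> a h1 [b h2]; exists (fun i => a i + b i) => i j hi hj.
have := h1 i j hi hj; have := h2 i j hi hj; lra.
Qed.

Lemma hom_lin a b u u' v v' : hom u u' -> hom v v' ->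
  hom (lincomb a u b v) (lincomb a u' b v').
Proof.
case=> f hf [g hg]; exists (fun i => a * f i + b * g i) => i j hi hj.
rewrite /lincomb.
have := hf i j hi hj; have := hg i j hi hj.
move=> e1 e2.
have -> : a * u i j + b * v i j - (a * u' i j + b * v' i j) = a * (u i j - u' i j) + b * (v i j - v' i j) by ring.
rewrite e1 e2; ring.
Qed.

Lemma hom_2k c c' : hom c c' -> hom (act_2k k c) (act_2k k c').
Proof.
case=> f hf; exists (fun i => f (pK i)) => i j hi hj.
by rewrite /act_2k (hf _ _ (pK_lt i) hj) sK_pK // pK_sK.
Qed.

Lemma hom_l c c' : hom c c' -> hom (act_l l c) (act_l l c').
Proof.
case=> f hf; exists f => i j hi hj.
by rewrite /act_l (hf _ _ hi (pL_lt j)).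
Qed.

Definition csum (n : nat) (F : nat -> chain R) : chain R :=
  fun i j => \sum_(t < n) F t i j.

Lemma hom_csum n F G : (forall t, (t < n)%N -> hom (F t) (G t)) ->
  hom (csum n F) (csum n G).
Proof.
elim: n => [|n IH] h.
  by apply: hom_ext => i j _ _; rewrite /csum !big_ord0.
have [f hf] : hom (csum n F) (csum n G) by apply: IH => t ht; apply: h; lia.
have [g hg] := h n (ltnSn n).
exists (fun i => f i + g i) => i j hi hj.
rewrite /csum !big_ord_recr /=.
have := hf i j hi hj; have := hg i j hi hj; rewrite /csum; lra.
Qed.

Lemma pair_ext (c c' a a' : chain R) : (forall i j, (i < K)%N -> (j < l)%N -> c i j * a i j = c' i j * a' i j) ->
  pr c a = pr c' a'.
Proof.
move=> h; rewrite /pair; apply: eq_bigr => i _; apply: eq_bigr => j _; exact: h.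
Qed.

Lemma cocycle_rows (a : chain R) : is_cocycle k l a -> forall i, (i < K)%N ->
  \sum_(j < l) a i j = \sum_(j < l) a (pK i) j.
Proof.
move=> ha i hi; apply/eqP; rewrite -subr_eq0 -sumrB; apply/eqP; exact: ha.
Qed.

Lemma telesc_K (g S : nat -> R) : (forall i, (i < K)%N -> S i = S (pK i)) ->
  \sum_(i < K) (g i - g (sK i)) * S i = 0.
Proof.
move=> hS.
rewrite (eq_bigr (fun i : 'I_K => g i * S i - g (sK i) * S i)); last by move=> i _; ring.
rewrite sumrB.
rewrite [X in _ - X](eq_bigr (fun i : 'I_K => g (sK i) * S (pK (sK i)))); last first.
  by move=> i _; rewrite pK_sK.
rewrite (sumK_sK (fun i => g i * S (pK i))).
rewrite [X in _ - X](eq_bigr (fun i : 'I_K => g i * S i)) ?subrr // => i _.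
by rewrite -hS.
Qed.

Lemma pair_hom (c c' a : chain R) : is_cocycle k l a -> hom c c' -> pr c a = pr c' a.
Proof.
move=> ha [g hg]; apply/eqP; rewrite -subr_eq0; apply/eqP.
rewrite /pair -sumrB.
rewrite (eq_bigr (fun i : 'I_K => (g i - g (sK i)) * \sum_(j < l) a i j)).
  apply: (@telesc_K g (fun i => \sum_(j < l) a i j)) => i hi; exact: cocycle_rows.
move=> i _; rewrite -sumrB mulr_sumr; apply: eq_bigr => j _.
by rewrite -mulrBl hg.
Qed.

Lemma pair_lin1 (a b : R) (u v z : chain R) : pr (lincomb a u b v) z = a * pr u z + b * pr v z.
Proof.
rewrite /pair /lincomb !mulr_sumr -big_split /=; apply: eq_bigr => i _.
rewrite !mulr_sumr -big_split /=; apply: eq_bigr => j _; ring.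
Qed.

Lemma pair_lin2 (a b : R) (u v z : chain R) : pr z (lincomb a u b v) = a * pr z u + b * pr z v.
Proof.
rewrite /pair /lincomb !mulr_sumr -big_split /=; apply: eq_bigr => i _.
rewrite !mulr_sumr -big_split /=; apply: eq_bigr => j _; ring.
Qed.

Lemma pair_csum1 n (F : nat -> chain R) (z : chain R) : pr (csum n F) z = \sum_(t < n) pr (F t) z.
Proof.
rewrite /pair /csum.
transitivity (\sum_(i < K) \sum_(t < n) \sum_(j < l) F t i j * z i j).
  apply: eq_bigr => i _; under eq_bigr => j _ do rewrite mulr_suml.
  exact: exchange_big.
exact: exchange_big.
Qed.


Definition dW (W : chain R) : chain R := fun i j => W i j - W i (sL j).
Definition QW (W : chain R) : chain R :=
  fun i j => W i j + W i (sL j) - W (pK i) j - W (sK i) (sL j).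
Definition fW (W : chain R) (i : nat) : R := - (W i 0%N - W (pK i) 0%N).
Definition DW (W : chain R) : chain R := fun i j => QW W i j + fW W i - fW W (sK i).

Definition Vf (W : chain R) i n : R :=
  if odd n then W i (sL n./2) - W (pK i) (n./2 %% l)%N
  else W i (n./2 %% l)%N - W (pK i) (n./2 %% l)%N.

Lemma odd2 j : odd (2 * j) = false. Proof. by rewrite mul2n odd_double. Qed.
Lemma half2 j : (2 * j)./2 = j. Proof. by rewrite mul2n doubleK. Qed.
Lemma half2S j : (2 * j).+1./2 = j.
Proof. by rewrite mul2n -[(j.*2).+1]/(true + j.*2)%N half_bit_double. Qed.
Lemma odd2S j : odd (2 * j).+1 = true. Proof. by rewrite /= odd2. Qed.

Lemma Vf_even W i j : (j < l)%N -> Vf W i (2 * j) = W i j - W (pK i) j.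
Proof. by move=> hj; rewrite /Vf odd2 half2 modn_small. Qed.
Lemma Vf_odd W i j : (j < l)%N -> Vf W i (2 * j).+1 = W i (sL j) - W (pK i) j.
Proof. by move=> hj; rewrite /Vf odd2S half2S modn_small. Qed.
Lemma Vf_end W i : Vf W i (2 * l) = Vf W i 0.
Proof. by rewrite /Vf odd2 half2 modnn mod0n. Qed.

Lemma bseq_dW W i n : (n < 2 * l)%N -> Defs.bseq k (dW W) i n = Vf W i n - Vf W i n.+1.
Proof.
move=> hn; have := odd_double_half n; rewrite -mul2n.
case ho: (odd n) => /= e; rewrite -e in hn *.
- have hj : (n./2 < l)%N by lia.
  have -> : (1 + 2 * n./2).+1 = 2 * (n./2).+1 by lia.
  rewrite /Defs.bseq add1n odd2S half2S Vf_odd //.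
  case: (ltngtP (n./2).+1 l) => h; [| lia |].
  + rewrite Vf_even // /dW /succL modn_small //; ring.
  + rewrite h Vf_end /Vf /= mod0n /dW /succL h modnn; ring.
- rewrite add0n /Defs.bseq odd2 half2 Vf_even; last lia.
  rewrite Vf_odd; last lia. rewrite /dW; ring.
Qed.

Definition G (a : chain R) i m : R :=
  \sum_(n < 2 * l | (m < n)%N) Defs.bseq k a i n + 2^-1 * Defs.bseq k a i m.

Lemma G_dW W i m : (m < 2 * l)%N ->
  G (dW W) i m = (Vf W i m + Vf W i m.+1) / 2 - Vf W i 0.
Proof.
move=> hm; rewrite /G.
have -> : \sum_(n < 2 * l | (m < n)%N) Defs.bseq k (dW W) i n =
          \sum_(m.+1 <= n < 2 * l) (Vf W i n - Vf W i n.+1).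
  rewrite big_geq_mkord; apply: eq_big => [n|n _]; first by [].
  exact: bseq_dW.
rewrite (@telescope_sumr_eq _ _ _ (fun n => - Vf W i n)); last first.
  by move=> n _; rewrite opprK addrC.
  exact: hm.
by rewrite Vf_end bseq_dW //; field.
Qed.

Lemma Vf_zero W i : Vf W i 0 = W i 0%N - W (pK i) 0%N.
Proof. exact: (@Vf_even W i 0%N hl). Qed.

Lemma Vf_even2 W i j : (j < l)%N -> Vf W i (2 * j).+2 = W i (sL j) - W (pK i) (sL j).
Proof.
move=> hj; have -> : (2 * j).+2 = (2 * j.+1)%N by lia.
case: (ltngtP j.+1 l) => h; [| lia |].
- by rewrite Vf_even // /succL modn_small.
- by rewrite h Vf_end Vf_zero /succL h modnn.
Qed.

Lemma cupF_G (b a : chain R) : cupF k l b a =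
  \sum_(i < K) \sum_(j < l) (b i j * G a i (2 * j) - b (pK i) j * G a i (2 * j).+1).
Proof.
rewrite /cupF; apply: eq_bigr => i _.
rewrite mulr_sumr -big_split /=.
rewrite (eq_bigr (fun m : 'I_(2 * l)%N => Defs.bseq k b i m * G a i m)); last first.
  move=> m _; rewrite /G mulrDr mulr_sumr; ring.
rewrite (@sum_parity _ l (fun m => Defs.bseq k b i m * G a i m)).
apply: eq_bigr => j _.
rewrite /Defs.bseq odd2 odd2S half2 half2S; ring.
Qed.

Lemma cupF_dW W (b : chain R) : cupF k l b (dW W) = pr (DW W) b.
Proof.
rewrite cupF_G.
rewrite (eq_bigr (fun i : 'I_K => \sum_(j < l) b i j * G (dW W) i (2 * j) -
   \sum_(j < l) b (pK i) j * G (dW W) i (2 * j).+1)); last by move=> i _; rewrite sumrB.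
rewrite sumrB.
rewrite -(sumK_sK (fun i => \sum_(j < l) b (pK i) j * G (dW W) i (2 * j).+1)).
rewrite /pair -sumrB; apply: eq_bigr => i _.
rewrite -sumrB; apply: eq_bigr => j _.
have hj := ltn_ord j; have hi := ltn_ord i.
rewrite pK_sK // !G_dW; try lia.
rewrite Vf_even // Vf_odd // Vf_odd // Vf_even2 // !Vf_zero.
by rewrite /DW /QW /fW pK_sK //; field.
Qed.

Lemma face_sum0 (a : chain R) i : is_cocycle k l a -> (i < K)%N ->
  \sum_(m < 2 * l) Defs.bseq k a i m = 0.
Proof.
move=> ha hi; rewrite (@sum_parity _ l (fun m => Defs.bseq k a i m)).
rewrite -[RHS](ha i hi); apply: eq_bigr => j _.
by rewrite /Defs.bseq odd2 odd2S half2 half2S.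
Qed.

Lemma cupF_anti (a b : chain R) : is_cocycle k l a -> is_cocycle k l b ->
  cupF k l b a = - cupF k l a b.
Proof.
move=> ha hb; apply/eqP; rewrite -subr_eq0 opprK; apply/eqP.
rewrite /cupF -big_split /= big1 // => i _.
have := pair_sym (2 * l) (fun m => Defs.bseq k b i m) (fun m => Defs.bseq k a i m).
rewrite face_sum0 // mul0r => e.
rewrite -[RHS]e.
have -> : \sum_(m < 2 * l) Defs.bseq k a i m * Defs.bseq k b i m =
          \sum_(m < 2 * l) Defs.bseq k b i m * Defs.bseq k a i m.
  by apply: eq_bigr => m _; rewrite mulrC.
by field.
Qed.

Lemma dW_cocycle W : is_cocycle k l (dW W).
Proof.
move=> i hi; rewrite /dW.
rewrite (eq_bigr (fun j : 'I_l => (W i j - W (pK i) j) - (W i (sL j) - W (pK i) (sL j)))); last first.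
  by move=> j _; ring.
rewrite sumrB (sumL_sL (fun j => W i j - W (pK i) j)); exact: subrr.
Qed.

Lemma DW_hom W : hom (DW W) (QW W).
Proof. exists (fW W) => i j hi hj; rewrite /DW; ring. Qed.

Lemma PD_of W x : hom x (QW W) -> PD_dual k l x (dW W).
Proof.
move=> hx; split; first exact: dW_cocycle.
move=> b hb; rewrite cupF_dW (pair_hom hb (DW_hom W)).
exact: (pair_hom hb (hom_sym hx)).
Qed.

Definition sh (W : chain R) : chain R := fun i j => W (pK i) (pL j).

Lemma rot_hom g t (u v : chain R) p q :
  (forall (a b : R) (x y : chain R) i j, g (lincomb a x b y) i j = lincomb a (g x) b (g y) i j) ->
  rot_equiv k l g t u v ->
  hom (g (lincomb p u q v)) (lincomb (cos t * p - sin t * q) u (sin t * p + cos t * q) v).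
Proof.
move=> glin [hu hv].
apply: (@hom_trans _ (lincomb p (g u) q (g v))).
  by apply: hom_ext => i j _ _; exact: glin.
apply: hom_trans (hom_lin p q hu hv) _.
by apply: hom_ext => i j _ _; rewrite /lincomb; ring.
Qed.

Lemma lin_2k : forall (a b : R) (x y : chain R) i j,
  act_2k k (lincomb a x b y) i j = lincomb a (act_2k k x) b (act_2k k y) i j.
Proof. by []. Qed.
Lemma lin_l : forall (a b : R) (x y : chain R) i j,
  act_l l (lincomb a x b y) i j = lincomb a (act_l l x) b (act_l l y) i j.
Proof. by []. Qed.

Lemma exist_W (u v : chain R) (ph th p0 q0 : R) :
  rot_equiv k l (act_2k k) ph u v -> rot_equiv k l (act_l l) th u v ->
  cos ph != 1 -> cos (ph + th) != 1 ->
  hom (lincomb p0 u q0 v)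
      (QW (sh (lincomb (coefs (cos ph) (sin ph) (cos th) (sin th) p0 q0).1 u
                       (coefs (cos ph) (sin ph) (cos th) (sin th) p0 q0).2 v))).
Proof.
move=> hA hL h1 h2.
set c1 := cos ph; set s1 := sin ph; set c2 := cos th; set s2 := sin th.
set al := (coefs c1 s1 c2 s2 p0 q0).1; set be := (coefs c1 s1 c2 s2 p0 q0).2.
set W' := lincomb al u be v.
have hA1 := rot_hom al be lin_2k hA.
have hL1 := rot_hom al be lin_l hL.
have hAL := hom_trans (hom_2k hL1) (rot_hom _ _ lin_2k hA).
have hAAL := hom_trans (hom_2k hAL) (rot_hom _ _ lin_2k hA).
apply: hom_sym.
apply: (@hom_trans _ (lincomb 1 (lincomb 1 (act_2k k (act_l l W')) 1 (act_2k k W'))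
                             (-1) (lincomb 1 (act_2k k (act_2k k (act_l l W'))) 1 W'))).
  apply: hom_ext => i j hi hj.
  rewrite /QW /sh /lincomb /act_2k /act_l pL_sL // pK_sK //; ring.
apply: hom_trans (hom_lin _ _ (hom_lin _ _ hAL hA1) (hom_lin _ _ hAAL (hom_refl W'))) _.
apply: hom_ext => i j hi hj; rewrite /W' /lincomb.
have hN : let cw := c1 * c2 - s1 * s2 in let sw := s1 * c2 + c1 * s2 in
  let m1 := c1 + cw - (c1 * cw - s1 * sw) - 1 in
  let m2 := s1 + sw - (s1 * cw + c1 * sw) in m1 ^+ 2 + m2 ^+ 2 != 0.
  move=> cw sw m1 m2.
  have -> : m1 ^+ 2 + m2 ^+ 2 = ((1 - c1) ^+ 2 + s1 ^+ 2) * ((1 - cw) ^+ 2 + sw ^+ 2) by rewrite /m1 /m2; ring.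
  have hcw : cw = cos (ph + th) by rewrite cosD.
  rewrite mulf_neq0 // lt0r_neq0 // pos_sq2 // subr_eq0 eq_sym //.
  by rewrite hcw.
move: hN; rewrite /al /be /coefs /= => hN.
rewrite /c1 /s1 /c2 /s2 in hN *; by field; exact: hN.
Qed.

Lemma pair_csum2 n (F : nat -> chain R) (z : chain R) : pr z (csum n F) = \sum_(t < n) pr z (F t).
Proof.
rewrite /pair /csum.
transitivity (\sum_(i < K) \sum_(t < n) \sum_(j < l) z i j * F t i j).
  apply: eq_bigr => i _; under eq_bigr => j _ do rewrite mulr_sumr.
  exact: exchange_big.
exact: exchange_big.
Qed.

Definition E (x W : chain R) : R := pr x (dW (sh W)).

Lemma E_hom1 x x' W : hom x x' -> E x W = E x' W.
Proof. move=> h; rewrite /E; apply: pair_hom h; exact: dW_cocycle. Qed.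

Lemma E_hom2 x W W' : hom W W' -> E x W = E x W'.
Proof.
case=> g hg; rewrite /E; apply: pair_ext => i j hi hj; congr (_ * _).
rewrite /dW /sh.
have e1 := hg _ _ (pK_lt i) (pL_lt j).
have e2 := hg _ _ (pK_lt i) (pL_lt (sL j)).
apply/eqP; rewrite -subr_eq0; apply/eqP.
transitivity ((W (pK i) (pL j) - W' (pK i) (pL j)) - (W (pK i) (pL (sL j)) - W' (pK i) (pL (sL j)))); first ring.
by rewrite e1 e2 subrr.
Qed.

Lemma E_lin1 p q x y W : E (lincomb p x q y) W = p * E x W + q * E y W.
Proof. exact: pair_lin1. Qed.

Lemma E_lin2 p q x W W' : E x (lincomb p W q W') = p * E x W + q * E x W'.
Proof.
rewrite /E -pair_lin2; apply: pair_ext => i j _ _; congr (_ * _).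
rewrite /dW /sh /lincomb; ring.
Qed.

Lemma E_csum1 n F W : E (csum n F) W = \sum_(t < n) E (F t) W.
Proof. exact: pair_csum1. Qed.

Lemma E_csum2 n F x : E x (csum n F) = \sum_(t < n) E x (F t).
Proof.
rewrite /E -(pair_csum2 n (fun t => dW (sh (F t)))); apply: pair_ext => i j _ _; congr (_ * _).
by rewrite /dW /sh /csum sumrB.
Qed.

Lemma E_2k x W : E (act_2k k x) (act_2k k W) = E x W.
Proof.
rewrite /E /pair.
exact: (sumK_pK (fun i => \sum_(j < l) x i j * dW (sh W) i j)).
Qed.

Lemma E_l x W : E (act_l l x) (act_l l W) = E x W.
Proof.
rewrite /E /pair; apply: eq_bigr => i _.
rewrite -(sumL_pL (fun j => x i j * dW (sh W) i j)).
apply: eq_bigr => j _; have hj := ltn_ord j.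
by rewrite /act_l /dW /sh sL_pL // pL_sL.
Qed.

Lemma E_eqs g t t' (u v u' v' : chain R) :
  (forall (a b : R) (x y : chain R) i j, g (lincomb a x b y) i j = lincomb a (g x) b (g y) i j) ->
  (forall x W, E (g x) (g W) = E x W) ->
  rot_equiv k l g t u v -> rot_equiv k l g t' u' v' ->
  let c := cos t in let s := sin t in let c' := cos t' in let s' := sin t' in
  [/\ E u u' = c * c' * E u u' + c * s' * E u v' + s * c' * E v u' + s * s' * E v v',
      E u v' = - c * s' * E u u' + c * c' * E u v' - s * s' * E v u' + s * c' * E v v',
      E v u' = - s * c' * E u u' - s * s' * E u v' + c * c' * E v u' + c * s' * E v v' &
      E v v' = s * s' * E u u' - s * c' * E u v' - c * s' * E v u' + c * c' * E v v'].
Proof.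
move=> glin ginv [hu hv] [hu' hv'] c s c' s'.
rewrite /c /s /c' /s'; split.
- by rewrite -{1}ginv (E_hom1 _ hu) (E_hom2 _ hu') E_lin1 !E_lin2; ring.
- by rewrite -{1}ginv (E_hom1 _ hu) (E_hom2 _ hv') E_lin1 !E_lin2; ring.
- by rewrite -{1}ginv (E_hom1 _ hv) (E_hom2 _ hu') E_lin1 !E_lin2; ring.
- by rewrite -{1}ginv (E_hom1 _ hv) (E_hom2 _ hv') E_lin1 !E_lin2; ring.
Qed.

Local Notation phi r := (pi * r%:R / k%:R : R).
Local Notation tht s := (2 * pi * s%:R / l%:R : R).

Lemma tht_eq s : tht s = pi * (2 * s)%N%:R / l%:R.
Proof. by rewrite natrM; field; rewrite pnatr_eq0; lia. Qed.

Lemma cos_phi_ne1 r : (0 < r < 2 * k)%N -> cos (phi r) != 1.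
Proof. move=> /andP[h1 h2]; apply: cos_ne1; lia. Qed.

Lemma cos_phitht_ne1 r s : summand_index k l r s -> cos (phi r + tht s) != 1.
Proof.
case/and3P => /andP[r1 r2] /andP[s1 s2] hd.
have -> : phi r + tht s = pi * (l * r + 2 * k * s)%N%:R / (k * l)%N%:R.
  rewrite !natrD !natrM; field; rewrite !pnatr_eq0; lia.
apply: cos_ne1; try nia.
apply/eqP => e; move: hd; rewrite e.
by rewrite (_ : (2 * (k * l) = 2 * k * l)%N) ?dvdnn //; lia.
Qed.

Lemma E_zero r s r' s' (u v u' v' : chain R) :
  summand_index k l r s -> summand_index k l r' s' -> ~~ same_class k l r s r' s' ->
  equiv_pair k l r s u v -> equiv_pair k l r' s' u' v' ->
  [/\ E u u' = 0, E u v' = 0, E v u' = 0 & E v v' = 0].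
Proof.
move=> hi hi' hsc [_ _ hA hL _] [_ _ hA' hL' _].
case/and3P: hi => /andP[r1 r2] /andP[s1 s2] _.
case/and3P: hi' => /andP[r1' r2'] /andP[s1' s2'] _.
move: hsc; rewrite /same_class negb_or !negb_and.
rewrite (modn_small (_ : (2 * k - r < 2 * k)%N)); last lia.
rewrite (modn_small (_ : (l - s < l)%N)); last lia.
case/andP => hd1 hd2.
have [eA1 eA2 eA3 eA4] := E_eqs lin_2k E_2k hA hA'.
have [eL1 eL2 eL3 eL4] := E_eqs lin_l E_l hL hL'.
have [A1 A2] := alg_rot (cos2Dsin2 _) (cos2Dsin2 _) eA1 eA2 eA3 eA4.
have [L1 L2] := alg_rot (cos2Dsin2 _) (cos2Dsin2 _) eL1 eL2 eL3 eL4.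
rewrite -cosB in A1; rewrite -cosD in A2; rewrite -cosB in L1; rewrite -cosD in L2.
have [P1 P2] : E u u' + E v v' = 0 /\ E u v' - E v u' = 0.
  case/orP: hd1 => h.
  - apply: A1; apply: cosB_ne1 => //; lia.
  - apply: L1; rewrite !tht_eq; apply: cosB_ne1 => //; lia.
have [N1 N2] : E u u' - E v v' = 0 /\ E u v' + E v u' = 0.
  case/orP: hd2 => h.
  - apply: A2; apply: cosD_ne1 => //; lia.
  - apply: L2; rewrite !tht_eq; apply: cosD_ne1 => //; lia.
split; lra.
Qed.

Lemma QWsh_csum n (F : nat -> chain R) :
  hom (csum n (fun t => QW (sh (F t)))) (QW (sh (csum n F))).
Proof.
apply: hom_ext => i j _ _; rewrite /csum /QW /sh.
by rewrite !sumrB big_split.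
Qed.

Lemma isotypic_exist r s x : summand_index k l r s -> isotypic k l r s x ->
  exists n (u v : nat -> chain R) (a b al be : nat -> R),
    [/\ (forall t, (t < n)%N -> equiv_pair k l r s (u t) (v t)),
        hom x (csum n (fun t => lincomb (a t) (u t) (b t) (v t))) &
        hom x (QW (sh (csum n (fun t => lincomb (al t) (u t) (be t) (v t)))))].
Proof.
move=> hsi [_ [n [u [v [a [b [heq hx]]]]]]].
set cf := fun t => coefs (cos (phi r)) (sin (phi r)) (cos (tht s)) (sin (tht s)) (a t) (b t).
exists n, u, v, a, b, (fun t => (cf t).1), (fun t => (cf t).2); split => //.
apply: hom_trans hx _.
apply: hom_trans (QWsh_csum n _).
apply: (@hom_csum n (fun t => lincomb (a t) (u t) (b t) (v t)) (fun t => QW (sh (lincomb (cf t).1 (u t) (cf t).2 (v t))))) => t ht.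
have [_ _ hA hL _] := heq t ht.
apply: exist_W => //.
  case/and3P: hsi => h _ _; exact: cos_phi_ne1.
exact: cos_phitht_ne1.
Qed.

Lemma E_iso_zero r s r' s' x (n' : nat) (u' v' : nat -> chain R) (al be : nat -> R) :
  summand_index k l r s -> summand_index k l r' s' -> ~~ same_class k l r s r' s' ->
  isotypic k l r s x ->
  (forall t, (t < n')%N -> equiv_pair k l r' s' (u' t) (v' t)) ->
  E x (csum n' (fun t => lincomb (al t) (u' t) (be t) (v' t))) = 0.
Proof.
move=> hi hi' hsc [_ [n [u [v [a [b [heq hx]]]]]]] heq'.
rewrite (E_hom1 _ hx).
rewrite (E_csum1 n (fun t => lincomb (a t) (u t) (b t) (v t))).
apply: big1 => t _; rewrite E_lin1 !E_csum2.
rewrite !big1 ?mulr0 ?addr0 // => t' _; rewrite E_lin2;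
  have [e1 e2 e3 e4] := E_zero hi hi' hsc (heq t (ltn_ord t)) (heq' t' (ltn_ord t'));
  by rewrite ?e1 ?e2 ?e3 ?e4 !mulr0 addr0.
Qed.
End Main.

Unset Implicit Arguments.
Set Strict Implicit.

Theorem mainTheorem2 (R : realType) (k l : nat) (hk : (1 <= k)%N) (hl : (3 <= l)%N)
  (r s r' s' : nat) :
  summand_index k l r s -> summand_index k l r' s' ->
  ~~ same_class k l r s r' s' ->
  forall x y : chain R,
    isotypic k l r s x -> isotypic k l r' s' y ->
    omega_orth k l x y.
Proof.
move=> hi hi' hsc x y hx hy.
have hl' : (0 < l)%N by lia.
have [n [u [v [a [b [al [be [heq hx1 hx2]]]]]]]] := isotypic_exist hk hl' hi hx.
have [n' [u' [v' [a' [b' [al' [be' [heq' hy1 hy2]]]]]]]] := isotypic_exist hk hl' hi' hy.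
split; first by eexists; exact: (PD_of hk hl' hx2).
move=> c [hc hcx].
have [hay hyb] := PD_of hk hl' hy2.
rewrite -(hyb c hc) (cupF_anti hay hc) (hcx _ hay).
have := E_iso_zero hk hl' al' be' hi hi' hsc hx heq'.
by rewrite /E => ->; rewrite oppr0.
Qed.
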